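(* Let $\mathcal{C}$ be an Additive-CSP($\psi$) instance with $\mathrm{val}(\mathcal{C})\ge 1-\epsilon$. Then $\mathrm{GI}(G_{\mathcal{C}},G_{\mathcal{C}^0})\ge 1-\epsilon$.
   Context: $H$ is a finite abelian group, $k\ge3$, $\psi\subseteq H^k$ a balanced pairwise independent subgroup (proper subgroup of $H^k$; for $a$ uniform in $\psi$ each coordinate uniform on $H$, any two coordinates independent). An instance $\mathcal{C}=(C_1,\dots,C_m)$ on variables $x_1,\dots,x_n$ over $H$ has constraints $\psi(x_{j_1}+a_1,\dots,x_{j_k}+a_k)=1$ on distinct variables, $a_i\in H$; $\mathcal{C}^0$ sets all $a_i=0$; $\mathrm{val}(\mathcal{C})$ is the maximum fraction of constraints satisfied by an assignment. Variable gadget $\Gamma_x$ for a variable $x$: fix $H=\mathbb{Z}_{p_1}\oplus\dots\oplus\mathbb{Z}_{p_t}$ with $p_i\ge2$; vertices $x\mapsto b$ for $b\in H$. An $i$-row is a set of $p_i$ elements of $H$ agreeing in all coordinates except the $i$-th. Row part (only if $t>1$): for every $i$ and every $i$-row $R$, add a new vertex $w_R$ adjacent to all $x\mapsto b$, $b\in R$, and $i$ new vertices each adjacent only to $w_R$. Cycle part: for every $i$ and $i$-row $R$: if $p_i=2$ add an edge between its two vertices; if $p_i\ge3$, write $R=\{r_0,\dots,r_{p_i-1}\}$ with $r_j$ having $i$-th coordinate $j$, and for each $j\in\mathbb{Z}_{p_i}$ add the edge $\{x\mapsto r_j,x\mapsto r_{j+1}\}$ and two new vertices $u,v$ with edges $\{u,x\mapsto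 r_j\},\{u,x\mapsto r_{j+1}\},\{u,v\},\{v,x\mapsto r_{j+1}\}$. Graph $G_{\mathcal{C}}$: one copy of $\Gamma_{x_j}$ for each variable $x_j$; for each constraint $C_i$ on $(x_{j_1},\dots,x_{j_k})$, a set of constraint vertices, one per assignment $\alpha$ to these variables satisfying $C_i$ (distinct constraints have distinct constraint vertices), forming a clique, with each $\alpha$ adjacent to $x_{j_l}\mapsto\alpha(x_{j_l})$ for $l\in[k]$. $\mathrm{GI}(G,G')=\max_\pi\frac{|\{e\in E(G):\pi(e)\in E(G')\}|}{\max\{|E(G)|,|E(G')|\}}$ over bijections $\pi$. *)

(* Defs.v *)
From HB Require Import structures.
From mathcomp Require Import all_boot all_order all_algebra.
Set Implicit Arguments. Unset Strict Implicit. Unset Printing Implicit Defensive.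
Import Order.TTheory GRing.Theory Num.Theory.
Local Open Scope ring_scope.

(* The group H = Z_{p_0} (+) ... (+) Z_{p_{t-1}} (coordinates 0-based),
   with the standing assumption 2 <= p i made explicit in the theorem. *)
Section Group.
Variables (t : nat) (p : 'I_t -> nat).

Definition grp := {dffun forall i : 'I_t, 'Z_(p i)}.

Definition gadd (x y : grp) : grp := finfun (fun i => x i + y i).
Definition gzero : grp := finfun (fun i => 0).
Definition gopp (x : grp) : grp := finfun (fun i => - x i).

Definition incr (i : 'I_t) (x : grp) : grp := finfun (fun l => x l + (l == i)%:R).

Definition is_row (i : 'I_t) (R : {set grp}) : bool :=
  [exists b : grp, R == [set c : grp | [forall l, (l != i) ==> (c l == b l)]]].

(* vertices of a variable gadget (before validity filtering) *)
Definition gbase :=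
  (grp + ('I_t * {set grp}) + ('I_t * {set grp} * 'I_t) + ('I_t * grp * bool))%type.

Definition XV (b : grp) : gbase := inl (inl (inl b)).
Definition WV i R : gbase := inl (inl (inr (i, R))).
Definition LV i R (l : 'I_t) : gbase := inl (inr (i, R, l)).
Definition UV i (b : grp) : gbase := inr (i, b, false).
Definition VV i (b : grp) : gbase := inr (i, b, true).

(* The 0-based direction i has i.+1 leaves (= the paper's 1-based index) *)
Definition gvalid (g : gbase) : bool :=
  match g with
  | inl (inl (inl _)) => true
  | inl (inl (inr (i, R))) => (1 < t)%N && is_row i R
  | inl (inr (i, R, l)) => [&& (1 < t)%N, is_row i R & (l <= i)%N]
  | inr (i, _, _) => (2 < p i)%N
  end.

Definition garc (g g' : gbase) : bool :=
  [|| [exists i, exists R, exists b, [&& g == WV i R, g' == XV b & b \in R]],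
      [exists i, exists R, exists l, (g == LV i R l) && (g' == WV i R)],
      [exists i, exists b, (g == XV b) && (g' == XV (incr i b))]
    | [exists i, exists b, (2 < p i)%N &&
         [|| (g == UV i b) && (g' == XV b),
             (g == UV i b) && (g' == XV (incr i b)),
             (g == UV i b) && (g' == VV i b)
           | (g == VV i b) && (g' == XV (incr i b))]]].

Section Instance.
Variables (k n m : nat).

Record instance := Instance {
  cvar : 'I_m -> 'I_k -> 'I_n;
  cshift : 'I_m -> 'I_k -> grp }.

Definition zero_instance (C : instance) : instance :=
  Instance (cvar C) (fun _ _ => gzero).

Variable psi : {set {ffun 'I_k -> grp}}.

Definition satisfies (C : instance) (x : {ffun 'I_n -> grp}) (i : 'I_m) : bool :=
  [ffun l => gadd (x (cvar C i l)) (cshift C i l)] \in psi.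

Definition val_count (C : instance) : nat :=
  \max_(x : {ffun 'I_n -> grp}) #|[set i : 'I_m | satisfies C x i]|.

Definition valC {R : realFieldType} (C : instance) : R :=
  (val_count C)%:R / m%:R.

(* vertices of G_C: gadget vertices (variable index, gadget vertex)
   and constraint vertices (constraint index, satisfying assignment alpha,
   where alpha l is the value of variable cvar i l) *)
Definition vbase := (('I_n * gbase) + ('I_m * {ffun 'I_k -> grp}))%type.

Definition vvalid (C : instance) (v : vbase) : bool :=
  match v with
  | inl (_, g) => gvalid g
  | inr (i, a) => [ffun l => gadd (a l) (cshift C i l)] \in psi
  end.

Definition vert (C : instance) := {v : vbase | vvalid C v}.

Definition varc (C : instance) (v w : vbase) : bool :=
  match v, w with
  | inl (x, g), inl (y, g') => (x == y) && garc g g'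
  | inr (i, a), inr (j, a') => (i == j) && (a != a')
  | inr (i, a), inl (y, g) => [exists l, (y == cvar C i l) && (g == XV (a l))]
  | _, _ => false
  end.

Definition adjG (C : instance) : rel (vert C) :=
  fun u v => varc C (val u) (val v) || varc C (val v) (val u).

End Instance.
End Group.

Definition edges (V : finType) (r : rel V) : {set {set V}} :=
  [set e : {set V} | [exists u, exists v, [&& u != v, r u v & e == [set u; v]]]].

Definition GI {R : realFieldType} (V V' : finType) (r : rel V) (r' : rel V') : R :=
  (\max_(f : {ffun V -> V'} | injectiveb f && [forall y, y \in codom f])
      #|[set e in edges r | (f @: e) \in edges r']|)%:R
  / (maxn #|edges r| #|edges r'|)%:R.

Arguments adjG {t p k n m} psi C _ _.
Arguments valC {t p k n m} psi {R} C.

(* Main.v *)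
Set Warnings "-notation-overridden,-ambiguous-paths".
Require Import Defs.
From HB Require Import structures.
From mathcomp Require Import all_boot all_order all_algebra.
From mathcomp Require Import zify.
Import Order.TTheory GRing.Theory Num.Theory.
Set Implicit Arguments. Unset Strict Implicit. Unset Printing Implicit Defensive.


Section G.
Variables (t : nat) (p : 'I_t -> nat).
Local Notation grp := (grp p).
Local Open Scope ring_scope.

Lemma gaddC (x y : grp) : gadd x y = gadd y x.
Proof. by apply/ffunP => i; rewrite !ffunE addrC. Qed.
Lemma gaddA (x y z : grp) : gadd x (gadd y z) = gadd (gadd x y) z.
Proof. by apply/ffunP => i; rewrite !ffunE addrA. Qed.
Lemma gadd0 (x : grp) : gadd x (gzero p) = x.
Proof. by apply/ffunP => i; rewrite !ffunE addr0. Qed.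
Lemma gaddN (x : grp) : gadd x (gopp x) = gzero p.
Proof. by apply/ffunP => i; rewrite !ffunE subrr. Qed.
Lemma gaddK (x d : grp) : gadd (gadd x d) (gopp d) = x.
Proof. by apply/ffunP => i; rewrite !ffunE addrK. Qed.
Lemma gaddNK (x d : grp) : gadd (gadd x (gopp d)) d = x.
Proof. by apply/ffunP => i; rewrite !ffunE subrK. Qed.
Lemma gopp_add (x y : grp) : gopp (gadd x y) = gadd (gopp x) (gopp y).
Proof. by apply/ffunP => i; rewrite !ffunE opprD. Qed.
Lemma incr_gadd i (b d : grp) : incr i (gadd b d) = gadd (incr i b) d.
Proof. by apply/ffunP => l; rewrite !ffunE addrAC. Qed.
Lemma gadd_inj (d : grp) : injective (fun c => gadd c d).
Proof. by move=> x y /(congr1 (fun c => gadd c (gopp d))); rewrite /= !gaddK. Qed.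

Definition shs (d : grp) (R : {set grp}) : {set grp} := [set gadd c d | c in R].

Lemma mem_shs d R c : (c \in shs d R) = (gadd c (gopp d) \in R).
Proof.
apply/imsetP/idP => [[c' Hc' ->]|H]; first by rewrite gaddK.
by exists (gadd c (gopp d)) => //; rewrite gaddNK.
Qed.

Lemma shsK d R : shs (gopp d) (shs d R) = R.
Proof.
apply/setP => c; rewrite !mem_shs.
have -> : gopp (gopp d) = d by apply/ffunP => i; rewrite !ffunE opprK.
by rewrite gaddK.
Qed.

Lemma is_row_shs i d R : is_row i R -> is_row i (shs d R).
Proof.
case/existsP => b /eqP HR; apply/existsP; exists (gadd b d); apply/eqP/setP => c.
rewrite mem_shs HR !inE; apply: eq_forallb => l.
by rewrite !ffunE (can2_eq (addrNK (d l)) (addrK (d l))).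
Qed.

Lemma is_row_shsE i d R : is_row i (shs d R) = is_row i R.
Proof.
apply/idP/idP; last exact: is_row_shs.
by move=> /(is_row_shs (gopp d)); rewrite shsK.
Qed.
End G.


Section G2.
Variables (t : nat) (p : 'I_t -> nat).

Definition gtr (d : grp p) (g : gbase p) : gbase p :=
  match g with
  | inl (inl (inl b)) => XV (gadd b d)
  | inl (inl (inr (i, R))) => WV i (shs d R)
  | inl (inr (i, R, l)) => LV i (shs d R) l
  | inr (i, b, c) => inr (i, gadd b d, c)
  end.

Lemma gtrK d : cancel (gtr d) (gtr (gopp d)).
Proof.
have oo : gopp (gopp d) = d by apply/ffunP => i; rewrite !ffunE opprK.
by case=> [[[b|[i R]]|[[i R] l]]|[[i b] c]] /=; rewrite ?gaddK ?shsK.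
Qed.

Lemma gtr_inj d : injective (gtr d).
Proof. exact: can_inj (gtrK d). Qed.

Lemma gvalid_gtr d g : gvalid (gtr d g) = gvalid g.
Proof. by case: g => [[[b|[i R]]|[[i R] l]]|[[i b] c]] //=; rewrite is_row_shsE. Qed.

Lemma garc_gtr d g g' : garc g g' -> garc (gtr d g) (gtr d g').
Proof.
case/or4P.
- case/existsP => i /existsP [R /existsP [b /and3P [/eqP-> /eqP-> Hb]]].
  apply/or4P; constructor 1; apply/existsP; exists i; apply/existsP; exists (shs d R).
  apply/existsP; exists (gadd b d); by rewrite !eqxx /= mem_shs gaddK Hb.
- case/existsP => i /existsP [R /existsP [l /andP [/eqP-> /eqP->]]].
  apply/or4P; constructor 2; apply/existsP; exists i; apply/existsP; exists (shs d R).
  by apply/existsP; exists l; rewrite !eqxx.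
- case/existsP => i /existsP [b /andP [/eqP-> /eqP->]].
  apply/or4P; constructor 3; apply/existsP; exists i; apply/existsP; exists (gadd b d).
  by rewrite /= incr_gadd !eqxx.
- case/existsP => i /existsP [b /andP [Hp /or4P H]].
  apply/or4P; constructor 4; apply/existsP; exists i; apply/existsP; exists (gadd b d).
  rewrite Hp /=; apply/or4P.
  case: H => /andP [/eqP-> /eqP->] /=; rewrite ?incr_gadd.
  + by constructor 1; rewrite !eqxx.
  + by constructor 2; rewrite !eqxx.
  + by constructor 3; rewrite !eqxx.
  + by constructor 4; rewrite !eqxx.
Qed.
End G2.


Lemma set2_eq (T : finType) (a b u v : T) : u != v -> [set a; b] = [set u; v] ->
  (a = u /\ b = v) \/ (a = v /\ b = u).
Proof.
move=> uv E.
have Ha : a \in [set u; v] by rewrite -E set21.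
have Hb : b \in [set u; v] by rewrite -E set22.
have Hu : u \in [set a; b] by rewrite E set21.
have Hv : v \in [set a; b] by rewrite E set22.
case/set2P: Ha => Ha; subst a.
- case/set2P: Hv => Hv; first by rewrite Hv eqxx in uv.
  by left.
- case/set2P: Hu => Hu; first by rewrite Hu eqxx in uv.
  by right.
Qed.

Lemma mem_edges2 (V : finType) (r : rel V) (rs : symmetric r) a b :
  ([set a; b] \in edges r) = (a != b) && r a b.
Proof.
rewrite inE; apply/existsP/andP => [[u /existsP [v /and3P [uv ruv /eqP E]]]|[ab rab]].
- case: (set2_eq uv E) => [[-> ->]|[-> ->]]; first by [].
  by rewrite eq_sym rs.
- by exists a; apply/existsP; exists b; rewrite ab rab eqxx.
Qed.

Lemma edges_pairs (V : finType) (r : rel V) (rs : symmetric r) (Q : pred {set V}) :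
  (#|[set e in edges r | Q e]| * 2 =
   #|[set uv : V * V | [&& uv.1 != uv.2, r uv.1 uv.2 & Q [set uv.1; uv.2]]]|)%N.
Proof.
set EQ := [set e in edges r | Q e].
set PS := [set uv : V * V | _].
rewrite -[in RHS]sum1_card (partition_big (fun uv => [set uv.1; uv.2]) (fun e => e \in EQ)) /=; last first.
  case=> u v H; move: H; rewrite inE /= => /and3P [uv ruv Qe]; by rewrite inE mem_edges2 // uv ruv Qe.
rewrite (_ : #|EQ| * 2 = \sum_(e in EQ) 2)%N; last by rewrite sum_nat_const.
apply: eq_bigr => e.
rewrite !inE => /andP [/existsP [u /existsP [v /and3P [uv ruv /eqP E]]] Qe].
rewrite sum1dep_card.
have -> : [set x | (x \in PS) && ([set x.1; x.2] == e)] = [set (u, v); (v, u)].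
  apply/setP => [[a b]]; rewrite !inE /= E.
  apply/idP/idP.
  - case/andP => _ /eqP /(set2_eq uv) [[-> ->]|[-> ->]]; by rewrite eqxx ?orbT.
  - have s21 : [set v; u] = [set u; v] by apply/setP => z; rewrite !inE orbC.
    have Qvu : Q [set v; u] by rewrite s21 -E.
    case/orP => /eqP [-> ->]; rewrite ?uv ?ruv -?E ?Qe ?eqxx //= eq_sym uv rs ruv Qvu /=. all: try by rewrite s21 E eqxx.

by rewrite (cards2 (u, v) (v, u)); case: eqP => // [[E1 E2]]; rewrite E1 eqxx in uv.
Qed.


Lemma sum_option m (F : option 'I_m -> nat) : (\sum_o F o = F None + \sum_i F (Some i))%N.
Proof.
rewrite (bigD1 None) //=; congr (_ + _)%N.
rewrite (reindex_omap Some id) /=; last by case.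
by apply: eq_bigl => i; rewrite eqxx.
Qed.

Lemma imset_set2 (aT rT : finType) (f : aT -> rT) a b :
  f @: [set a; b] = [set f a; f b].
Proof. by rewrite imsetU !imset_set1. Qed.

Section I.
Variables (t : nat) (p : 'I_t -> nat) (k n m : nat) (psi : {set {ffun 'I_k -> grp p}}).
Local Notation V := (vbase p k n m).
Local Notation inst := (instance p k n m).

Definition adj0 (C : inst) (u v : V) := varc C u v || varc C v u.
Definition Apairs (C : inst) := [set uv : V * V |
  [&& vvalid psi C uv.1, vvalid psi C uv.2, uv.1 != uv.2 & adj0 C uv.1 uv.2]].
Definition cls (uv : V * V) : option 'I_m :=
  match uv.1, uv.2 with
  | inr (i, _), _ => Some i
  | _, inr (i, _) => Some i
  | _, _ => None end.

Lemma card_cls (S : {set V * V}) : #|S| =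
  (#|[set uv in S | cls uv == None]| + \sum_i #|[set uv in S | cls uv == Some i]|)%N.
Proof.
rewrite -sum1_card (partition_big cls predT) // sum_option.
congr (_ + _)%N; first by rewrite sum1dep_card.
by apply: eq_bigr => i _; rewrite sum1dep_card.
Qed.

Lemma card_lift (C : inst) (P : pred (V * V)) :
  #|[set uv : vert psi C * vert psi C | P (val uv.1, val uv.2)]| =
  #|[set uv : V * V | [&& vvalid psi C uv.1, vvalid psi C uv.2 & P uv]]|.
Proof.
rewrite -(card_imset _ (f := fun uv : vert psi C * vert psi C => (val uv.1, val uv.2))); last first.
  by move=> [a b] [c d] /= [/val_inj -> /val_inj ->].
apply: eq_card => [[a b]]; rewrite inE; apply/imsetP/idP.
- by case=> [[x y]]; rewrite inE /= => Pxy [-> ->]; rewrite (valP x) (valP y) Pxy.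
- case/and3P => va vb Pab.
  by exists (exist _ a va, exist _ b vb) => //; rewrite inE.
Qed.

Lemma adjG_sym (C : inst) : symmetric (adjG psi C).
Proof. by move=> u v; rewrite /adjG orbC. Qed.

Lemma card_edges (C : inst) : (#|edges (adjG psi C)| * 2 = #|Apairs C|)%N.
Proof.
have -> : edges (adjG psi C) = [set e in edges (adjG psi C) | predT e].
  by apply/setP => e; rewrite !inE andbT.
rewrite edges_pairs; last exact: adjG_sym.
transitivity #|[set uv : vert psi C * vert psi C |
   (fun uv => (uv.1 != uv.2) && adj0 C uv.1 uv.2) (val uv.1, val uv.2)]|.
  by apply: eq_card => [[a b]]; rewrite !inE /= andbT val_eqE.
apply: (etrans (card_lift C (fun uv : V * V => (uv.1 != uv.2) && adj0 C uv.1 uv.2))).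
apply: eq_card => [[a b]]; by rewrite !inE /= andbA.
Qed.

Lemma card_pres (C C' : inst) (f : vert psi C -> vert psi C') (F : V -> V)
  (finj : injective f) (fF : forall u, val (f u) = F (val u)) :
  (#|[set e in edges (adjG psi C) | f @: e \in edges (adjG psi C')]| * 2 =
   #|[set uv in Apairs C | (F uv.1, F uv.2) \in Apairs C']|)%N.
Proof.
rewrite edges_pairs; last exact: adjG_sym.
transitivity #|[set uv : vert psi C * vert psi C |
   (fun uv : V * V => [&& uv.1 != uv.2, adj0 C uv.1 uv.2 & (F uv.1, F uv.2) \in Apairs C'])
     (val uv.1, val uv.2)]|.
  apply: eq_card => [[a b]]; rewrite inE [in RHS]inE /= imset_set2 mem_edges2; last exact: adjG_sym.
  have fF' u : F (sval u) = sval (f u) by rewrite -fF.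
  rewrite /Apairs inE /= !fF' (svalP (f a)) (svalP (f b)) /=.
  have e1 : (sval a == sval b) = (a == b) := val_eqE a b.
  have e2 : (sval (f a) == sval (f b)) = (a == b) by rewrite -(inj_eq finj); exact: val_eqE.
  rewrite e1 e2 (inj_eq finj).
  by case: (a == b).
apply: (etrans (card_lift C (fun uv : V * V =>
   [&& uv.1 != uv.2, adj0 C uv.1 uv.2 & (F uv.1, F uv.2) \in Apairs C']))).
apply: eq_card => [[a b]]; rewrite !inE /=.
by rewrite !andbA.
Qed.
End I.


Section J.
Variables (t : nat) (p : 'I_t -> nat) (k n m : nat) (psi : {set {ffun 'I_k -> grp p}}).
Local Notation V := (vbase p k n m).
Local Notation inst := (instance p k n m).
Local Notation vec := ({ffun 'I_k -> grp p}).

Lemma Acases (C : inst) i (u v : V) : (u, v) \in Apairs psi C -> cls (u, v) = Some i ->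
  [\/ exists (a : vec) (a' : vec), [/\ u = inr (i, a), v = inr (i, a'), a != a', vvalid psi C u & vvalid psi C v],
      exists (a : vec) (l : 'I_k), [/\ u = inr (i, a), v = inl (cvar C i l, XV (a l)) & vvalid psi C u] |
      exists (a : vec) (l : 'I_k), [/\ u = inl (cvar C i l, XV (a l)), v = inr (i, a) & vvalid psi C v]].
Proof.
rewrite inE /= => /and4P [vu vv uv adj].
case: u vu uv adj => [[y g]|[i1 a]]; case: v vv => [[y' g']|[i2 a']] //= vv vu uv adj [Ei].
- subst i2; apply: Or33; move: adj => /existsP [l /andP [/eqP -> /eqP ->]].
  by exists a', l.
- subst i1; apply: Or32; move: adj => /orP [/existsP [l /andP [/eqP -> /eqP ->]]|//].
  by exists a, l.
- subst i1; apply: Or31; exists a, a'.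
  case/orP: adj => /andP [/eqP Ei Ha]; subst i2; split => //.
  by rewrite eq_sym.
Qed.

Lemma Einr (j : 'I_m) (x y : vec) : (inr (j, x) == inr (j, y) :> V) = (x == y).
Proof. by apply/eqP/eqP => [[->]|->]. Qed.

Section Map.
Variables (C C' : inst) (i j : 'I_m) (H : V -> V) (phi : vec -> vec) (ps : 'I_k -> grp p -> grp p).
Hypothesis hH1 : forall a, H (inr (i, a)) = inr (j, phi a).
Hypothesis hH2 : forall l b, H (inl (cvar C i l, XV b)) = inl (cvar C' j l, XV (ps l b)).
Hypothesis hphi : forall a l, phi a l = ps l (a l).
Hypothesis hphiinj : injective phi.
Hypothesis hval : forall a, vvalid psi C (inr (i, a)) -> vvalid psi C' (inr (j, phi a)).

Lemma Gmap (uv : V * V) : uv \in Apairs psi C -> cls uv = Some i ->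
    ((H uv.1, H uv.2) \in Apairs psi C') && (cls (H uv.1, H uv.2) == Some j).
Proof.
case: uv => u v Huv Hc.
case: (Acases Huv Hc) => [[a [a' [-> -> aa' va va']]]|[a [l [-> -> va]]]|[a [l [-> -> va]]]];
  rewrite ?hH1 ?hH2 inE ?(hval va) ?(hval va') //=.
- rewrite Einr (inj_eq hphiinj) aa' /adj0 /= eqxx (inj_eq hphiinj) aa' /=.
  by [].
- rewrite /adj0 /cls /= eqxx andbT orbF; apply/existsP; exists l; by rewrite hphi !eqxx.
- rewrite /adj0 /cls /= eqxx andbT; apply/existsP; exists l; by rewrite hphi !eqxx.
Qed.

Hypothesis hinj : injective (cvar C' j).
Hypothesis hpsinj : forall l, injective (ps l).

Definition shp (w : V) := (exists a, w = inr (i, a)) \/ (exists l b, w = inl (cvar C i l, XV b)).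

Lemma shape_inj w w' : shp w -> shp w' -> H w = H w' -> w = w'.
Proof.
case=> [[a ->]|[l [b ->]]]; case=> [[a' ->]|[l' [b' ->]]]; rewrite ?hH1 ?hH2 //.
- by case=> /hphiinj ->.
- case=> /hinj El; subst l' => /hpsinj ->; by [].
Qed.

Lemma shape_pair u v : (u, v) \in Apairs psi C -> cls (u, v) = Some i -> shp u /\ shp v.
Proof.
move=> A c; case: (Acases A c) => [[a [a' [-> -> _ _ _]]]|[a [l [-> -> _]]]|[a [l [-> -> _]]]].
- by split; left; [exists a | exists a'].
- by split; [left; exists a | right; exists l, (a l)].
- by split; [right; exists l, (a l) | left; exists a].
Qed.

Lemma Gmap_inj : {in [set uv in Apairs psi C | cls uv == Some i] &,
   injective (fun uv : V * V => (H uv.1, H uv.2))}.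
Proof.
move=> [u v] [u' v'] /setIdP [A1 /eqP c1] /setIdP [A2 /eqP c2] /= [E1 E2].
case: (shape_pair A1 c1) => s1 s2; case: (shape_pair A2 c2) => s1' s2'.
by rewrite (shape_inj s1 s1' E1) (shape_inj s2 s2' E2).
Qed.

Lemma Gmap_card : (#|[set uv in Apairs psi C | cls uv == Some i]| <=
   #|[set uv in Apairs psi C' | cls uv == Some j]|)%N.
Proof.
rewrite -(card_in_imset Gmap_inj); apply: subset_leq_card; apply/subsetP => w.
case/imsetP => uv /setIdP [A /eqP c] ->.
by apply/setIdP; apply/andP; apply: Gmap.
Qed.
End Map.

Hypothesis psi0 : [ffun _ => gzero p] \in psi.
Hypothesis psiD : forall a b, a \in psi -> b \in psi -> [ffun l => gadd (a l) (b l)] \in psi.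
Hypothesis psiN : forall a, a \in psi -> [ffun l => gopp (a l)] \in psi.

Lemma vshift_inj (d : 'I_k -> grp p) : injective (fun a : vec => [ffun l => gadd (a l) (d l)]).
Proof.
move=> a b E; apply/ffunP => l.
by have := congr1 (fun f : vec => f l) E; rewrite /= !ffunE => /gadd_inj.
Qed.

Definition Fm (C : inst) (x : {ffun 'I_n -> grp p}) (v : V) : V :=
  match v with
  | inl (y, g) => inl (y, gtr (gopp (x y)) g)
  | inr (i, a) => inr (i, if satisfies psi C x i
                          then [ffun l => gadd (a l) (gopp (x (cvar C i l)))]
                          else [ffun l => gadd (a l) (cshift C i l)])
  end.

Lemma Fm_inj C x : injective (Fm C x).
Proof.
case=> [[y g]|[i a]]; case=> [[y' g']|[i' a']] //= [E1 E2]; subst y' || subst i'.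
- by rewrite (gtr_inj E2).
- by case: (satisfies psi C x i) E2 => /vshift_inj ->.
Qed.

Lemma Fm_valid C x v : vvalid psi (zero_instance C) (Fm C x v) = vvalid psi C v.
Proof.
case: v => [[y g]|[i a]] /=; first exact: gvalid_gtr.
rewrite /satisfies; set w := [ffun l => gadd (x (cvar C i l)) (cshift C i l)].
case: ifP => Hw.
- apply/idP/idP => H.
  + have := psiD H Hw; congr (_ \in psi); apply/ffunP => l; rewrite !ffunE.
    by rewrite gadd0 gaddA gaddNK.
  + have := psiD H (psiN Hw); congr (_ \in psi); apply/ffunP => l; rewrite !ffunE.
    rewrite gadd0 gopp_add -gaddA [gadd (cshift C i l) _]gaddA.
    by rewrite (gaddC (cshift C i l)) -gaddA gaddN gadd0.
- by congr (_ \in psi); apply/ffunP => l; rewrite !ffunE gadd0.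
Qed.

Lemma Fm_none C x (uv : V * V) : uv \in Apairs psi C -> cls uv = None ->
  (Fm C x uv.1, Fm C x uv.2) \in Apairs psi (zero_instance C).
Proof.
case: uv => u v; rewrite inE /= => /and4P [vu vv uv adj] c.
rewrite inE /= !Fm_valid vu vv (inj_eq (@Fm_inj C x)) uv /=.
move: c vu vv uv adj; case: u => [[y g]|[i a]]; case: v => [[y' g']|[i' a']] //= _ _ _ _.
rewrite /adj0 /= => /orP [] /andP [/eqP E H]; subst y'; rewrite eqxx /=.
- by rewrite (garc_gtr _ H).
- by rewrite (garc_gtr _ H) orbT.
Qed.

Lemma Fm_some C x i (uv : V * V) : satisfies psi C x i ->
  uv \in Apairs psi C -> cls uv = Some i ->
  (Fm C x uv.1, Fm C x uv.2) \in Apairs psi (zero_instance C).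
Proof.
move=> sat A c.
pose phi (a : vec) := [ffun l => gadd (a l) (gopp (x (cvar C i l)))].
pose ps l b := gadd b (gopp (x (cvar C i l))).
have h1 : forall a, Fm C x (inr (i, a)) = inr (i, phi a) by move=> a /=; rewrite sat.
have h2 : forall l b, Fm C x (inl (cvar C i l, XV b)) =
   inl (cvar (zero_instance C) i l, XV (ps l b)) by [].
have h3 : forall a l, phi a l = ps l (a l) by move=> a l; rewrite ffunE.
have h4 : injective phi by exact: vshift_inj.
have h5 : forall a, vvalid psi C (inr (i, a)) -> vvalid psi (zero_instance C) (inr (i, phi a)).
  by move=> a; rewrite -h1 Fm_valid.
by case/andP: (Gmap h1 h2 h3 h4 h5 A c).
Qed.

Definition cnt (C : inst) i := #|[set uv in Apairs psi C | cls uv == Some i]|.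

Lemma cnt_le (C C' : inst) i j : injective (cvar C i) -> injective (cvar C' j) ->
  (cnt C i <= cnt C' j)%N.
Proof.
move=> hi hj.
pose d l := gadd (cshift C i l) (gopp (cshift C' j l)).
pose phi (a : vec) := [ffun l => gadd (a l) (d l)].
pose H (v : V) : V := match v with
  | inr (_, a) => inr (j, phi a)
  | inl (y, g) => if [pick l | cvar C i l == y] is Some l
                  then inl (cvar C' j l, gtr (d l) g) else v
  end.
apply: (@Gmap_card C C' i j H phi (fun l b => gadd b (d l))) => //.
- move=> l b /=; case: pickP => [l' /eqP /hi -> //|/(_ l)]; by rewrite eqxx.
- by move=> a l; rewrite ffunE.
- exact: vshift_inj.
- move=> a /=; congr (_ \in psi); apply/ffunP => l; rewrite !ffunE.
  by rewrite /d -gaddA gaddNK.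
- move=> l; exact: gadd_inj.
Qed.

Lemma cnt_pos (C : inst) i : (0 < k)%N -> (0 < cnt C i)%N.
Proof.
move=> k0; rewrite card_gt0; apply/set0Pn.
pose a0 : vec := [ffun l => gopp (cshift C i l)].
pose l0 : 'I_k := Ordinal k0.
exists (inr (i, a0), inl (cvar C i l0, XV (a0 l0))).
rewrite !inE /= eqxx andbT /adj0 /= orbF.
apply/andP; split.
- by congr (_ \in psi): psi0; apply/ffunP => l; rewrite !ffunE gaddC gaddN.
- by apply/existsP; exists l0; rewrite !eqxx.
Qed.

Lemma none_eq (C C' : inst) :
  [set uv in Apairs psi C | cls uv == None] = [set uv in Apairs psi C' | cls uv == None].
Proof.
apply/setP => [[u v]]; rewrite !inE /adj0 /=.
by case: u => [[y g]|[i a]]; case: v => [[y' g']|[i' a']]; rewrite /= ?andbF.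
Qed.
End J.

Unset Implicit Arguments.
Local Open Scope ring_scope.

Lemma arith (E E0 N G0 m c s A A0 : nat) : (E * 2 = A -> E0 * 2 = A0 -> A = G0 + m * c -> A0 = G0 + m * c ->
  G0 + s * c <= N * 2 -> s <= m -> 0 < c -> 0 < m -> [/\ E0 = E, 0 < E & s * E <= N * m])%N.
Proof.
move=> h1 h2 h3 h4 h5 h6 h7 h8; split; [lia | nia |].
have : (s * (E * 2) <= (N * 2) * m)%N; last by lia.
rewrite h1 h3.
have : (s * G0 <= m * G0)%N by apply: leq_mul.
nia.
Qed.

Theorem lemma7p3 (R : realFieldType)
  (t : nat) (p : 'I_t -> nat) (hp : forall i, (2 <= p i)%N)
  (k : nat) (hk : (3 <= k)%N)
  (psi : {set {ffun 'I_k -> grp p}})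
  (psi0 : [ffun _ => gzero p] \in psi)
  (psiD : forall a b, a \in psi -> b \in psi -> [ffun l => gadd (a l) (b l)] \in psi)
  (psiN : forall a, a \in psi -> [ffun l => gopp (a l)] \in psi)
  (psi_proper : psi != [set: {ffun 'I_k -> grp p}])
  (psi_bal : forall (l : 'I_k) (b : grp p),
      (#|[set a in psi | a l == b]| * #|grp p| = #|psi|)%N)
  (psi_pw : forall (l1 l2 : 'I_k), l1 != l2 -> forall (b c : grp p),
      (#|[set a in psi | (a l1 == b) && (a l2 == c)]| * #|grp p| ^ 2 = #|psi|)%N)
  (n m : nat) (C : instance p k n m)
  (hdist : forall i, injective (cvar C i))
  (eps : R)
  (hval : 1 - eps <= valC psi C) :
  1 - eps <= GI (adjG psi C) (adjG psi (zero_instance C)).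
Proof.
apply: (le_trans hval).
set C0 := zero_instance C.
have k0 : (0 < k)%N by apply: leq_trans hk.
have [x Hx] : {x : {ffun 'I_n -> grp p} | val_count psi C = #|[set i | satisfies psi C x i]| }.
  rewrite /val_count; apply: bigop.eq_bigmax; apply/card_gt0P; by exists [ffun => gzero p].
set s := #|[set i | satisfies psi C x i]| in Hx.
have sm : (s <= m)%N by rewrite -[m]card_ord max_card.
pose F := Fm psi C x.
have Fv : forall u : vert psi C, vvalid psi C0 (F (val u)).
  by move=> u; rewrite /F Fm_valid //; exact: (valP u).
pose f := [ffun u : vert psi C => (exist _ (F (val u)) (Fv u) : vert psi C0)].
have fF : forall u, val (f u) = F (val u) by move=> u; rewrite ffunE.
have finj : injective f.
  by move=> u v /(congr1 val); rewrite !fF => /Fm_inj /val_inj.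
have fsurj : forall w, w \in codom f.
  move=> w; have Finj := @Fm_inj _ _ _ _ _ psi C x.
  have vv : vvalid psi C (finv F (val w)).
    by rewrite -(@Fm_valid _ _ _ _ _ psi psiD psiN C x) (f_finv Finj) (valP w).
  have -> : w = f (exist (vvalid psi C) _ vv : vert psi C).
    by apply: val_inj; rewrite fF /=; exact: esym (f_finv Finj _).
  exact: codom_f.
set N := #|[set e in edges (adjG psi C) | f @: e \in edges (adjG psi C0)]|.
have NGI : (N <= \max_(g : {ffun vert psi C -> vert psi C0} | injectiveb g && [forall y, y \in codom g])
      #|[set e in edges (adjG psi C) | (g @: e) \in edges (adjG psi C0)]|)%N.
  apply: (leq_bigmax_cond f); apply/andP; split; first exact/injectiveP.
  by apply/forallP.
have EC : (#|edges (adjG psi C)| * 2 = #|Apairs psi C|)%N := card_edges psi C.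
have EC0 : (#|edges (adjG psi C0)| * 2 = #|Apairs psi C0|)%N := card_edges psi C0.
have EN : (N * 2 = #|[set uv in Apairs psi C | (F uv.1, F uv.2) \in Apairs psi C0]|)%N
  := @card_pres _ _ _ _ _ psi C C0 f F finj fF.
case: (posnP m) => [m0|mpos].
  rewrite /valC (_ : (m%:R : R) = 0); last by rewrite m0.
  rewrite invr0 mulr0 /GI; apply: divr_ge0; exact: ler0n.
pose i0 : 'I_m := Ordinal mpos.
set c := cnt psi C i0.
have cC : forall i, cnt psi C i = c.
  by move=> i; apply/anti_leq/andP; split; apply: cnt_le; apply: hdist.
have cC0 : forall i, cnt psi C0 i = c.
  by move=> i; apply/anti_leq/andP; split; apply: cnt_le; apply: hdist.
set G0 := #|[set uv in Apairs psi C | cls uv == None]|.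
have sumc : forall (X : 'I_m -> nat), (forall i, X i = c) -> (\sum_i X i = m * c)%N.
  by move=> X HX; rewrite (eq_bigr (fun _ => c)) // big_const_ord iter_addn_0 mulnC.
have AC : #|Apairs psi C| = (G0 + m * c)%N by rewrite card_cls (sumc _ cC).
have AC0 : #|Apairs psi C0| = (G0 + m * c)%N by rewrite card_cls (sumc _ cC0) (none_eq _ C0 C).
have PSc : (G0 + s * c <= N * 2)%N.
  rewrite EN card_cls; apply: leq_add.
    apply: eq_leq; apply: eq_card => uv; apply/setIdP/setIdP => [[A c']|[/setIdP [A _] c']] //.
    split => //; apply/setIdP; split => //; exact: Fm_none (eqP c').
  rewrite (bigID (fun i => satisfies psi C x i)) /=; apply: leq_trans (leq_addr _ _).
  rewrite (eq_bigr (fun _ => c)); last first.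
    move=> i sat; rewrite -(cC i); apply: eq_card => uv.
    apply/setIdP/setIdP => [[/setIdP [A _] c']|[A c']]; first by [].
    split => //; apply/setIdP; split => //; exact: Fm_some sat A (eqP c').
  by rewrite /s -sum_nat_const; apply: eq_leq; apply: eq_bigl => i; rewrite inE.
have cpos : (0 < c)%N by apply: cnt_pos.
have [EE Epos key] := @arith _ _ _ _ _ _ _ _ _ EC EC0 AC AC0 PSc sm cpos mpos.
rewrite /GI EE maxnn.
apply: (@le_trans _ _ (N%:R / #|edges (adjG psi C)|%:R)).
  rewrite /valC Hx ler_pdivrMr ?ltr0n // mulrAC ler_pdivlMr ?ltr0n // -!natrM ler_nat.
  exact: key.
by apply: ler_wpM2r; [rewrite invr_ge0 ler0n | rewrite ler_nat].
Qed.
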